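(* There exists $\lambda_0\ge 0$ such that for every $\lambda\ge\lambda_0$, the cross-group ordering $o=O(n^a,n^b)$ output by the xOrder procedure with parameter $\lambda$ satisfies $$\Delta\mathrm{xAUC}^o\le\max\left(\frac{1}{n_1^a},\frac{1}{n_1^b}\right).$$
   Context: Setting: two disjoint finite groups $a,b$ of instances with labels $Y_u\in\{0,1\}$; $n^g,n^g_1,n^g_0$ denote the size, number of positives and number of negatives of group $g$ (all counts $\ge1$); $n_1=n_1^a+n_1^b$, $n_0=n_0^a+n_0^b$, $k_{a,b}=n_1^an_0^b$, $k_{b,a}=n_0^an_1^b$, $k=n_0n_1$. $\mathrm{p}^a=(\mathrm{p}^{a(1)},\dots,\mathrm{p}^{a(n^a)})$ and $\mathrm{p}^b=(\mathrm{p}^{b(1)},\dots,\mathrm{p}^{b(n^b)})$ are fixed orderings of the groups. A cross-group ordering is a list of all instances of $a\cup b$ preserving the relative orders within $\mathrm{p}^a$ and within $\mathrm{p}^b$; ''precedes'' means ranked higher. $\mathrm{xAUC}^o(a,b)=\frac{1}{n_1^an_0^b}\#\{(u,v):u\in a,Y_u=1,v\in b,Y_v=0,u\text{ precedes }v\text{ in }o\}$, $\mathrm{xAUC}^o(b,a)$ symmetrically; $\Delta\mathrm{xAUC}^o=|\mathrm{xAUC}^o(a,b)-\mathrm{xAUC}^o(b,a)|$. xOrder: For $0\le i\le n^a$, $0\le j\le n^b$ and a list $q$ interleaving $\mathrm{p}^{a(1)},\dots,\mathrm{p}^{a(i)}$ and $\mathrm{p}^{b(1)},\dots,\mathrm{p}^{b(j)}$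 with within-group orders preserved, let $q^{\to b}$ be $q$ followed by $\mathrm{p}^{b(j+1)},\dots,\mathrm{p}^{b(n^b)}$ and $q^{\to a}$ be $q$ followed by $\mathrm{p}^{a(i+1)},\dots,\mathrm{p}^{a(n^a)}$. Define $A(q)=\frac{1}{n_1^an_0^b}\#\{(u,v): u\in\{\mathrm{p}^{a(1)},..,\mathrm{p}^{a(i)}\},Y_u=1,v\in b,Y_v=0,u\text{ precedes }v\text{ in }q^{\to b}\}$, $B(q)=\frac{1}{n_1^bn_0^a}\#\{(u,v): u\in\{\mathrm{p}^{b(1)},..,\mathrm{p}^{b(j)}\},Y_u=1,v\in a,Y_v=0,u\text{ precedes }v\text{ in }q^{\to a}\}$, and $\widehat G(q)=\frac{k_{a,b}}{k}A(q)+\frac{k_{b,a}}{k}B(q)-\lambda|A(q)-B(q)|$. Set $O(i,0)=(\mathrm{p}^{a(1)},\dots,\mathrm{p}^{a(i)})$, $O(0,j)=(\mathrm{p}^{b(1)},\dots,\mathrm{p}^{b(j)})$. For $i=1,\dots,n^a$, $j=1,\dots,n^b$ (in increasing order): if $\widehat G(O(i-1,j)\oplus\mathrm{p}^{a(i)})>\widehat G(O(i,j-1)\oplus\mathrm{p}^{b(j)})$ then $O(i,j)=O(i-1,j)\oplus\mathrm{p}^{a(i)}$, otherwise $O(i,j)=O(i,j-1)\oplus\mathrm{p}^{b(j)}$ ($\oplus$ appends an element to the end of a list). The output is $O(n^a,n^b)$. *)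

(* Defs.v *)
From HB Require Import structures.
From mathcomp Require Import all_boot all_order all_algebra.
From mathcomp Require Import reals.
Set Implicit Arguments. Unset Strict Implicit. Unset Printing Implicit Defensive.
Import Order.TTheory GRing.Theory Num.Theory.
Local Open Scope ring_scope.

(* Group a is given by its fixed ordering p^a, recorded as the list of labels
   la : seq bool (la`_i = Y of p^{a(i+1)}, true = positive); likewise lb for b.
   Instances are identified with their positions in p^a / p^b.
   A list interleaving p^{a(1..i)} and p^{b(1..j)} preserving within-group
   orders is encoded as s : seq bool with count id s = i trues and
   count negb s = j falses: the k-th entry of the list is the next unused
   element of a if s`_k = true, and of b otherwise. *)

(* position (0-based) of the (i+1)-th a-element, i.e. of p^{a(i+1)}, in s *)
Fixpoint posA (s : seq bool) (i : nat) : nat :=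
  match s with
  | [::] => 0%N
  | true :: s' => if i is i'.+1 then (posA s' i').+1 else 0%N
  | false :: s' => (posA s' i).+1
  end.

(* position (0-based) of p^{b(j+1)} in s *)
Fixpoint posB (s : seq bool) (j : nat) : nat :=
  match s with
  | [::] => 0%N
  | false :: s' => if j is j'.+1 then (posB s' j').+1 else 0%N
  | true :: s' => (posB s' j).+1
  end.

Definition n1 (l : seq bool) : nat := count id l.
Definition n0 (l : seq bool) : nat := count negb l.

Definition cntAB (la lb : seq bool) (s : seq bool) (ia : nat) : nat :=
  \sum_(i < ia) \sum_(j < size lb)
     [&& nth false la i, ~~ nth true lb j & (posA s i < posB s j)%N].

Definition cntBA (la lb : seq bool) (s : seq bool) (jb : nat) : nat :=
  \sum_(j < jb) \sum_(i < size la)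
     [&& nth false lb j, ~~ nth true la i & (posB s j < posA s i)%N].

Section XAUC.
Variable R : realType.

Definition xAUC_ab (la lb o : seq bool) : R :=
  (cntAB la lb o (size la))%:R / ((n1 la)%:R * (n0 lb)%:R).
Definition xAUC_ba (la lb o : seq bool) : R :=
  (cntBA la lb o (size lb))%:R / ((n1 lb)%:R * (n0 la)%:R).
Definition dxAUC (la lb o : seq bool) : R :=
  `|xAUC_ab la lb o - xAUC_ba la lb o|.

Definition compB (lb q : seq bool) : seq bool :=
  q ++ nseq (size lb - count negb q) false.
Definition compA (la q : seq bool) : seq bool :=
  q ++ nseq (size la - count id q) true.

Definition Aq (la lb q : seq bool) : R :=
  (cntAB la lb (compB lb q) (count id q))%:R / ((n1 la)%:R * (n0 lb)%:R).
Definition Bq (la lb q : seq bool) : R :=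
  (cntBA la lb (compA la q) (count negb q))%:R / ((n1 lb)%:R * (n0 la)%:R).

Definition Ghat (lam : R) (la lb q : seq bool) : R :=
  let kab := ((n1 la) * (n0 lb))%:R in
  let kba := ((n0 la) * (n1 lb))%:R in
  let k := ((n0 la + n0 lb) * (n1 la + n1 lb))%:R in
  kab / k * Aq la lb q + kba / k * Bq la lb q
  - lam * `|Aq la lb q - Bq la lb q|.

Fixpoint xO (lam : R) (la lb : seq bool) (i j : nat) : seq bool :=
  match i with
  | 0%N => nseq j false
  | i'.+1 =>
    (fix go (j : nat) : seq bool :=
       match j with
       | 0%N => nseq i true
       | j'.+1 =>
         let x := rcons (xO lam la lb i' j) true in
         let y := rcons (go j') false in
         if Ghat lam la lb y < Ghat lam la lb x then x else y
       end) j
  end.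

Definition xOrder (lam : R) (la lb : seq bool) : seq bool :=
  xO lam la lb (size la) (size lb).

End XAUC.

(* Main.v *)
Require Import Defs.
From HB Require Import structures.
From mathcomp Require Import all_boot all_order all_algebra.
From mathcomp Require Import reals.
From mathcomp Require Import lra ring.
Import Order.TTheory GRing.Theory Num.Theory.

Lemma posA_cat (s1 s2 : seq bool) i :
  posA (s1 ++ s2) i = if (i < count id s1)%N then posA s1 i
                      else (size s1 + posA s2 (i - count id s1))%N.
Proof.
elim: s1 i => [|[] s1 IH] i /=.
- by rewrite subn0.
- case: i => [|i] //=; rewrite IH add1n ltnS subSS; by case: ifP.
- rewrite IH add0n; by case: ifP.
Qed.

Lemma posA_lt (s : seq bool) i : (i < count id s)%N -> (posA s i < size s)%N.
Proof.
elim: s i => [|[] s IH] i //=.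
- case: i => [|i] //= H; by rewrite ltnS IH.
- move=> H; by rewrite ltnS IH.
Qed.

Lemma posB_posA (s : seq bool) j : posB s j = posA (map negb s) j.
Proof. by elim: s j => [|[] s IH] [|j] //=; rewrite IH. Qed.

Lemma posA_posB (s : seq bool) j : posA s j = posB (map negb s) j.
Proof. by elim: s j => [|[] s IH] [|j] //=; rewrite IH. Qed.

Lemma count_negb_map (s : seq bool) : count negb (map negb s) = count id s.
Proof. by rewrite count_map; apply: eq_count => x /=; rewrite negbK. Qed.
Lemma count_id_map (s : seq bool) : count id (map negb s) = count negb s.
Proof. by rewrite count_map. Qed.

Lemma posB_cat (s1 s2 : seq bool) j :
  posB (s1 ++ s2) j = if (j < count negb s1)%N then posB s1 j
                      else (size s1 + posB s2 (j - count negb s1))%N.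
Proof. by rewrite !posB_posA map_cat posA_cat count_id_map size_map. Qed.

Lemma posB_lt (s : seq bool) j : (j < count negb s)%N -> (posB s j < size s)%N.
Proof. rewrite posB_posA -count_id_map -(size_map negb); exact: posA_lt. Qed.

Definition rbn (lb : seq bool) (j : nat) : nat :=
  \sum_(j' < size lb) ((j <= j')%N && ~~ nth true lb j').

Lemma sum_eq1 (n j : nat) (f : nat -> bool) :
  (\sum_(k < n) ((j == k) && f k) = ((j < n) && f j))%N.
Proof.
elim: n => [|n IH]; first by rewrite big_ord0.
rewrite big_ord_recr /= IH [in RHS]ltnS.
case: (ltngtP j n) => h /=.
- by rewrite addn0.
- by [].
- by rewrite h.
Qed.

Lemma rbnS (lb : seq bool) j : rbn lb j = (rbn lb j.+1 + ~~ nth true lb j)%N.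
Proof.
rewrite /rbn.
have -> : (\sum_(j' < size lb) ((j <= j')%N && ~~ nth true lb j') =
   \sum_(j' < size lb) ((j == j') && ~~ nth true lb j') +
   \sum_(j' < size lb) ((j < j')%N && ~~ nth true lb j'))%N.
  rewrite -big_split /=; apply: eq_bigr => k _.
  rewrite leq_eqVlt; case: (ltngtP j k) => h //=; by case: (~~ _).
rewrite (sum_eq1 (size lb) j (fun k => ~~ nth true lb k)) addnC; congr (_ + _)%N.
case: (ltnP j (size lb)) => h //=.
by rewrite nth_default.
Qed.

Lemma rbn_size (lb : seq bool) : rbn lb (size lb) = 0%N.
Proof. by rewrite /rbn big1 // => k _; rewrite leqNgt ltn_ord. Qed.

Lemma cntAB_app (la lb q : seq bool) :
  cntAB la lb (compB lb (rcons q true)) (count id q).+1 =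
  (cntAB la lb (compB lb q) (count id q) + nth false la (count id q) * rbn lb (count negb q))%N.
Proof.
rewrite /cntAB /compB big_ord_recr /=.
set c := count id q; set d := count negb q.
have e1 : count negb (rcons q true) = d by rewrite -cats1 count_cat /= !addn0.
rewrite e1 cat_rcons.
congr (_ + _)%N.
  apply: eq_bigr => i _; apply: eq_bigr => j _.
  rewrite !posA_cat !posB_cat ltn_ord -/c -/d.
  case: ifP => // hj.
  have h1 := @posA_lt q i (ltn_ord i).
  rewrite !(leq_trans h1) ?leq_addr //.
rewrite posA_cat ltnn subnn /= addn0.
case: (nth false la c) => /=; last by rewrite mul0n big1.
rewrite mul1n /rbn; apply: eq_bigr => j _.
rewrite posB_cat -/d; case: ifP => hj.
  rewrite ltnNge ltnW ?posB_lt //= leqNgt hj; by case: (~~ _).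
by rewrite /= addnS ltnS leq_addr leqNgt hj andbC.
Qed.

Lemma cntBA_swap la lb s jb : cntBA la lb s jb = cntAB lb la (map negb s) jb.
Proof.
rewrite /cntBA /cntAB; apply: eq_bigr => j _; apply: eq_bigr => i _.
by rewrite (posB_posA s j) (posA_posB s i).
Qed.

Local Open Scope ring_scope.

Lemma Bq_swap (R : realType) la lb q : Bq R la lb q = Aq R lb la (map negb q).
Proof.
rewrite /Bq /Aq cntBA_swap count_id_map; congr ((cntAB _ _ _ _)%:R / _).
by rewrite /compB /compA map_cat map_nseq count_negb_map.
Qed.

Lemma Aq_app (R : realType) la lb q :
  Aq R la lb (rcons q true) = Aq R la lb q +
   (nth false la (count id q) * rbn lb (count negb q))%:R / ((n1 la)%:R * (n0 lb)%:R).
Proof.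
rewrite /Aq.
have -> : count id (rcons q true) = (count id q).+1 by rewrite -cats1 count_cat /= addn1.
by rewrite cntAB_app natrD mulrDl.
Qed.

Lemma Aq_stay (R : realType) la lb q : (count negb q < size lb)%N ->
  Aq R la lb (rcons q false) = Aq R la lb q.
Proof.
move=> h; rewrite /Aq.
have -> : count id (rcons q false) = count id q by rewrite -cats1 count_cat /= !addn0.
congr ((cntAB _ _ _ _)%:R / _).
rewrite /compB cat_rcons.
have -> : count negb (rcons q false) = (count negb q).+1 by rewrite -cats1 count_cat /= addn1.
by rewrite -(subnSK h).
Qed.

Definition Dq (R : realType) la lb q : R := Aq R la lb q - Bq R la lb q.

Lemma Dq_appA (R : realType) la lb q : (count id q < size la)%N ->
  Dq R la lb (rcons q true) = Dq R la lb q +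
   (nth false la (count id q) * rbn lb (count negb q))%:R / ((n1 la)%:R * (n0 lb)%:R).
Proof.
move=> h; rewrite /Dq Aq_app !Bq_swap map_rcons /= Aq_stay ?count_negb_map //.
by rewrite addrAC.
Qed.

Lemma Dq_appB (R : realType) la lb q : (count negb q < size lb)%N ->
  Dq R la lb (rcons q false) = Dq R la lb q -
   (nth false lb (count negb q) * rbn la (count id q))%:R / ((n1 lb)%:R * (n0 la)%:R).
Proof.
move=> h; rewrite /Dq Aq_stay // !Bq_swap map_rcons /= Aq_app count_id_map count_negb_map.
by rewrite opprD addrA.
Qed.

Local Open Scope ring_scope.

Lemma grid (R : realType) (D a b : nat -> nat -> R) (na nb : nat) (M : R) :
  (0 < na)%N -> (0 < nb)%N -> 0 <= M ->
  D 0%N 0%N = 0 ->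
  (forall i j, 0 <= a i j) -> (forall i j, 0 <= b i j) ->
  (forall i j, 0 <= (a i j - a i j.+1) + (b i j - b i.+1 j) <= M) ->
  (forall i, a i nb = 0) -> (forall j, b na j = 0) ->
  (forall i, (i < na)%N -> D i.+1 0%N = D i 0%N + a i 0%N) ->
  (forall j, (j < nb)%N -> D 0%N j.+1 = D 0%N j - b 0%N j) ->
  (forall i j, (i < na)%N -> (j < nb)%N ->
     (D i.+1 j.+1 = D i j.+1 + a i j.+1 /\
        `|D i j.+1 + a i j.+1| <= `|D i.+1 j - b i.+1 j|) \/
     (D i.+1 j.+1 = D i.+1 j - b i.+1 j /\
        `|D i.+1 j - b i.+1 j| <= `|D i j.+1 + a i j.+1|)) ->
  `|D na nb| <= M.
Proof.
move=> na0 nb0 M0 D00 a0 b0 mon anb bna H0i H0j Hc.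
pose x i j := D i j.+1 + a i j.+1.
pose y i j := D i.+1 j - b i.+1 j.
have cell : forall i j, (i < na)%N -> (j < nb)%N ->
   D i j + a i j <= D i.+1 j -> D i j.+1 <= D i j - b i j ->
   x i j <= D i.+1 j.+1 <= y i j.
  move=> i j hi hj L U.
  have hxy : x i j <= y i j.
    rewrite /x /y; have := mon i j; lra.
  case: (Hc i j hi hj) => [[-> _]|[-> _]]; rewrite -/(x i j) -/(y i j); lra.
have LU : forall i, (i < na)%N -> forall j, (j < nb)%N ->
   D i j + a i j <= D i.+1 j /\ D i j.+1 <= D i j - b i j.
  elim=> [|i IHi] hi.
    elim=> [|j IHj] hj.
      by rewrite H0i // H0j //; split; lra.
    have [L U] := IHj (ltnW hj).
    have := cell 0%N j hi (ltnW hj) L U; rewrite /x /y => /andP[h1 h2].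
    by rewrite (H0j j.+1 hj); split; lra.
  elim=> [|j IHj] hj.
    have [L U] := IHi (ltnW hi) 0%N hj.
    have := cell i 0%N (ltnW hi) hj L U; rewrite /x /y => /andP[h1 h2].
    by rewrite (H0i i.+1 hi); split; lra.
  have [L U] := IHj (ltnW hj).
  have := cell i.+1 j hi (ltnW hj) L U; rewrite /x /y => /andP[h1 h2].
  have [L' U'] := IHi (ltnW hi) j.+1 hj.
  have := cell i j.+1 (ltnW hi) hj L' U'; rewrite /x /y => /andP[h3 h4].
  split; lra.
have XY : forall i j, (i < na)%N -> (j < nb)%N -> x i j <= D i.+1 j.+1 <= y i j.
  by move=> i j hi hj; have [L U] := LU i hi j hj; apply: cell.
have F1 : forall i j, (i < na)%N -> (j < nb)%N -> M < D i.+1 j.+1 ->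
    D i.+1 j.+1 = x i j \/ (x i j < - M /\ M < y i j).
  move=> i j hi hj hM; have /andP[h1 h2] := XY i j hi hj.
  case: (Hc i j hi hj) => [[e _]|[e hn]]; first by left.
  rewrite -/(x i j) -/(y i j) in e hn *.
  have [hx|hx] := lerP 0 (x i j).
    left; move: hn; rewrite (ger0_norm hx) ger0_norm; lra.
  right; move: hn; rewrite (ltr0_norm hx) ger0_norm; lra.
have F2 : forall i j, (i < na)%N -> (j < nb)%N -> D i.+1 j.+1 < - M ->
    D i.+1 j.+1 = y i j \/ (x i j < - M /\ M < y i j).
  move=> i j hi hj hM; have /andP[h1 h2] := XY i j hi hj.
  case: (Hc i j hi hj) => [[e hn]|[e _]]; last by left.
  rewrite -/(x i j) -/(y i j) in e hn *.
  have [hy|hy] := lerP 0 (y i j).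
    right; move: hn; rewrite (ger0_norm hy) ltr0_norm; lra.
  left; move: hn; rewrite (ltr0_norm hy) ltr0_norm; lra.
have NG : forall i, (i < na)%N -> forall j, (j < nb)%N -> ~ (x i j < - M /\ M < y i j).
  elim=> [|i IHi] hi; elim=> [|j IHj] hj [hx hy].
  - move: hx hy; rewrite /x /y H0i // H0j // => hx hy.
    have := mon 0%N 0%N; lra.
  - have e1 : D 1 j.+1 = D 0%N j.+1 + a 0%N j.+1.
      case: (F1 0%N j hi (ltnW hj)) => //.
        move: hy; rewrite /y; have := b0 1%N j.+1; lra.
      by move=> g; case: (IHj (ltnW hj) g).
    move: hx hy; rewrite /x /y e1 H0j // => hx hy.
    have := mon 0%N j.+1; lra.
  - have e2 : D i.+1 1 = D i.+1 0%N - b i.+1 0%N.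
      case: (F2 i 0%N (ltnW hi) hj) => //.
        move: hx; rewrite /x; have := a0 i.+1 1%N; lra.
      by move=> g; case: (IHi (ltnW hi) 0%N hj g).
    move: hx hy; rewrite /x /y e2 (H0i i.+1 hi) => hx hy.
    have := mon i.+1 0%N; lra.
  - have e1 : D i.+2 j.+1 = D i.+1 j.+1 + a i.+1 j.+1.
      case: (F1 i.+1 j hi (ltnW hj)) => //.
        move: hy; rewrite /y; have := b0 i.+2 j.+1; lra.
      by move=> g; case: (IHj (ltnW hj) g).
    have e2 : D i.+1 j.+2 = D i.+1 j.+1 - b i.+1 j.+1.
      case: (F2 i j.+1 (ltnW hi) hj) => //.
        move: hx; rewrite /x; have := a0 i.+1 j.+2; lra.
      by move=> g; case: (IHi (ltnW hi) j.+1 hj g).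
    move: hx hy; rewrite /x /y e1 e2 => hx hy.
    have := mon i.+1 j.+1; lra.
clear Hc LU cell XY.
case: na na0 bna NG F1 F2 H0i => // na' _ bna NG F1 F2 H0i.
case: nb nb0 anb NG F1 F2 H0j => // nb' _ anb NG F1 F2 H0j.
have col0 : forall j, (j <= nb'.+1)%N -> D 0%N j <= 0.
  elim=> [|j IH] hj; first by rewrite D00.
  rewrite H0j //; have := IH (ltnW hj); have := b0 0%N j; lra.
have row0 : forall i, (i <= na'.+1)%N -> 0 <= D i 0%N.
  elim=> [|i IH] hi; first by rewrite D00.
  rewrite H0i //; have := IH (ltnW hi); have := a0 i 0%N; lra.
have col : forall i, (i <= na'.+1)%N -> D i nb'.+1 <= M.
  elim=> [|i IH] hi; first by have := col0 _ (leqnn _); lra.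
  rewrite leNgt; apply/negP => hM.
  case: (F1 i nb' hi (ltnSn _) hM).
    rewrite /x anb addr0 => e; have := IH (ltnW hi); lra.
  exact: NG i hi nb' (ltnSn _).
have row : forall j, (j <= nb'.+1)%N -> - M <= D na'.+1 j.
  elim=> [|j IH] hj; first by have := row0 _ (leqnn _); lra.
  rewrite leNgt; apply/negP => hM.
  case: (F2 na' j (ltnSn _) hj hM).
    rewrite /y bna subr0 => e; have := IH (ltnW hj); lra.
  exact: NG na' (ltnSn _) j hj.
rewrite ler_norml; apply/andP; split; [exact: row | exact: col].
Qed.

Local Open Scope ring_scope.

Lemma xO_i0 (R : realType) (lam : R) la lb i : xO lam la lb i 0 = nseq i true.
Proof. by case: i. Qed.

Lemma xO_SS (R : realType) (lam : R) la lb i j :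
  xO lam la lb i.+1 j.+1 =
  (if Ghat lam la lb (rcons (xO lam la lb i.+1 j) false) <
      Ghat lam la lb (rcons (xO lam la lb i j.+1) true)
   then rcons (xO lam la lb i j.+1) true else rcons (xO lam la lb i.+1 j) false).
Proof. by []. Qed.

Lemma count_rcons' (a : pred bool) s x : count a (rcons s x) = (count a s + a x)%N.
Proof. by rewrite -cats1 count_cat /= addn0. Qed.

Lemma xO_count (R : realType) (lam : R) la lb i j :
  count id (xO lam la lb i j) = i /\ count negb (xO lam la lb i j) = j.
Proof.
elim: i j => [|i IHi] j.
  by rewrite /= !count_nseq /= mul0n mul1n.
elim: j => [|j IHj].
  by rewrite xO_i0 !count_nseq /= mul0n mul1n.
rewrite xO_SS; case: ifP => _; rewrite !count_rcons' /=.
  by have [-> ->] := IHi j.+1; rewrite addn0 addn1.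
by have [-> ->] := IHj; rewrite addn0 addn1.
Qed.

Lemma nseqS_rcons (x : bool) i : nseq i.+1 x = rcons (nseq i x) x.
Proof. by elim: i => //= i ->. Qed.

Lemma cntAB_le la lb s ia : (cntAB la lb s ia <= ia * size lb)%N.
Proof.
rewrite /cntAB.
apply: (@leq_trans (\sum_(i < ia) size lb)%N).
  apply: leq_sum => i _.
  apply: (@leq_trans (\sum_(j < size lb) 1)%N).
    by apply: leq_sum => j _; rewrite leq_b1.
  by rewrite sum1_card card_ord.
by rewrite sum_nat_const card_ord.
Qed.

Lemma nth_ft l i : nth false l i -> nth true l i.
Proof. by elim: l i => [|x l IH] [|i] //=; apply: IH. Qed.

Local Open Scope ring_scope.

Definition wA (R : realType) la lb : R :=
  ((n1 la) * (n0 lb))%:R / ((n0 la + n0 lb) * (n1 la + n1 lb))%:R.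
Definition wB (R : realType) la lb : R :=
  ((n0 la) * (n1 lb))%:R / ((n0 la + n0 lb) * (n1 la + n1 lb))%:R.
Definition accq (R : realType) la lb q : R :=
  wA R la lb * Aq R la lb q + wB R la lb * Bq R la lb q.

Lemma Ghat_eq (R : realType) (lam : R) la lb q :
  Ghat lam la lb q = accq R la lb q - lam * `|Dq R la lb q|.
Proof. by []. Qed.

Lemma Aq_bnd (R : realType) la lb q : (count id q <= size la)%N ->
  0 <= Aq R la lb q <= (size la * size lb)%:R / ((n1 la)%:R * (n0 lb)%:R).
Proof.
move=> h; rewrite /Aq; apply/andP; split.
  by apply: divr_ge0; rewrite ?mulr_ge0 ?ler0n.
apply: ler_wpM2r; first by rewrite invr_ge0 mulr_ge0 ?ler0n.
rewrite ler_nat; apply: leq_trans (cntAB_le _ _ _ _) _; by rewrite leq_mul2r h orbT.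
Qed.

Lemma Bq_bnd (R : realType) la lb q : (count negb q <= size lb)%N ->
  0 <= Bq R la lb q <= (size lb * size la)%:R / ((n1 lb)%:R * (n0 la)%:R).
Proof. move=> h; rewrite Bq_swap; apply: Aq_bnd; by rewrite count_id_map. Qed.

Definition Cst (R : realType) la lb : R :=
  wA R la lb * ((size la * size lb)%:R / ((n1 la)%:R * (n0 lb)%:R)) +
  wB R la lb * ((size lb * size la)%:R / ((n1 lb)%:R * (n0 la)%:R)).

Definition KK (R : realType) la lb : R :=
  ((n1 la)%:R * (n0 lb)%:R) * ((n1 lb)%:R * (n0 la)%:R).

Lemma wA_ge0 (R : realType) la lb : 0 <= wA R la lb.
Proof. by apply: divr_ge0; rewrite ler0n. Qed.
Lemma wB_ge0 (R : realType) la lb : 0 <= wB R la lb.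
Proof. by apply: divr_ge0; rewrite ler0n. Qed.

Lemma acc_bnd (R : realType) la lb q : (count id q <= size la)%N ->
  (count negb q <= size lb)%N -> 0 <= accq R la lb q <= Cst R la lb.
Proof.
move=> h1 h2; have /andP[a1 a2] := @Aq_bnd R la lb q h1; have /andP[b1 b2] := @Bq_bnd R la lb q h2.
have wa := wA_ge0 R la lb; have wb := wB_ge0 R la lb.
rewrite /accq /Cst; apply/andP; split.
  by rewrite addr_ge0 // mulr_ge0.
by rewrite lerD // ler_wpM2l.
Qed.

Lemma Cst_ge0 (R : realType) la lb : 0 <= Cst R la lb.
Proof.
rewrite /Cst addr_ge0 // mulr_ge0 ?wA_ge0 ?wB_ge0 //; apply: divr_ge0;
  by rewrite ?mulr_ge0 ?ler0n.
Qed.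

Lemma Dq_int (R : realType) la lb q :
  (0 < n1 la)%N -> (0 < n0 la)%N -> (0 < n1 lb)%N -> (0 < n0 lb)%N ->
  exists z : int, Dq R la lb q * KK R la lb = z%:~R.
Proof.
move=> h1 h2 h3 h4.
exists (Posz (cntAB la lb (compB lb q) (count id q) * (n1 lb * n0 la))%N -
        Posz (cntBA la lb (Defs.compA la q) (count negb q) * (n1 la * n0 lb))%N).
rewrite intrB /Dq /Aq /Bq /KK -!pmulrn !natrM.
have e1 : (n1 la)%:R != 0 :> R by rewrite pnatr_eq0 -lt0n.
have e2 : (n0 la)%:R != 0 :> R by rewrite pnatr_eq0 -lt0n.
have e3 : (n1 lb)%:R != 0 :> R by rewrite pnatr_eq0 -lt0n.
have e4 : (n0 lb)%:R != 0 :> R by rewrite pnatr_eq0 -lt0n.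
by field; rewrite ?e1 ?e2 ?e3 ?e4 ?mulf_neq0.
Qed.

Local Open Scope ring_scope.

Definition lam0 (R : realType) la lb : R := Cst R la lb * KK R la lb + 1.

Lemma KK_gt0 (R : realType) la lb :
  (0 < n1 la)%N -> (0 < n0 la)%N -> (0 < n1 lb)%N -> (0 < n0 lb)%N ->
  0 < KK R la lb.
Proof. by move=> *; rewrite /KK !mulr_gt0 // ltr0n. Qed.

Lemma cmpG (R : realType) la lb (lam : R) p q :
  (0 < n1 la)%N -> (0 < n0 la)%N -> (0 < n1 lb)%N -> (0 < n0 lb)%N ->
  (count id p <= size la)%N -> (count negb p <= size lb)%N ->
  (count id q <= size la)%N -> (count negb q <= size lb)%N ->
  lam0 R la lb <= lam ->
  Ghat lam la lb p <= Ghat lam la lb q -> `|Dq R la lb q| <= `|Dq R la lb p|.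
Proof.
move=> h1 h2 h3 h4 p1 p2 q1 q2 hl.
rewrite !Ghat_eq => hG; rewrite leNgt; apply/negP => hlt.
have /andP[ap1 ap2] := acc_bnd R la lb p p1 p2.
have /andP[aq1 aq2] := acc_bnd R la lb q q1 q2.
have K0 := KK_gt0 R la lb h1 h2 h3 h4.
have C0 := Cst_ge0 R la lb.
have [zp ep] := Dq_int R la lb p h1 h2 h3 h4.
have [zq eq] := Dq_int R la lb q h1 h2 h3 h4.
have np : `|Dq R la lb p| * KK R la lb = `|zp|%:~R.
  by rewrite intr_norm -ep normrM (gtr0_norm K0).
have nq : `|Dq R la lb q| * KK R la lb = `|zq|%:~R.
  by rewrite intr_norm -eq normrM (gtr0_norm K0).
have hz : `|Dq R la lb p| * KK R la lb + 1 <= `|Dq R la lb q| * KK R la lb.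
  rewrite np nq -[1]/(1%:~R) -intrD ler_int lezD1 -(ltr_int R) -np -nq.
  by rewrite ltr_pM2r.
set t := `|Dq R la lb q| - `|Dq R la lb p|.
have t0 : 0 <= t by rewrite /t subr_ge0 ltW.
have tK : 1 <= t * KK R la lb by rewrite /t mulrBl; lra.
have l1 : lam0 R la lb * t <= lam * t by apply: ler_wpM2r.
have l2 : Cst R la lb * 1 <= Cst R la lb * (t * KK R la lb) by apply: ler_wpM2l.
have l3 : lam0 R la lb * t = Cst R la lb * (t * KK R la lb) + t.
  by rewrite /lam0; ring.
have l4 : lam * t = lam * `|Dq R la lb q| - lam * `|Dq R la lb p| by rewrite /t mulrBr.
have tpos : 0 < t by rewrite /t subr_gt0.
rewrite mulr1 in l2. lra.
Qed.

Local Open Scope ring_scope.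

Lemma frac_bnd (R : realType) (c : bool) (n m : nat) : (0 < n)%N -> (0 < m)%N ->
  0 <= (c : nat)%:R / (n%:R * m%:R) :> R /\ (c : nat)%:R / (n%:R * m%:R) <= 1 / n%:R :> R.
Proof.
move=> hn hm; split; first by rewrite divr_ge0 ?mulr_ge0 ?ler0n.
rewrite ler_pdivrMr ?mulr_gt0 ?ltr0n //.
have -> : 1 / n%:R * (n%:R * m%:R) = m%:R :> R.
  by field; rewrite pnatr_eq0 -lt0n.
by rewrite ler_nat; case: c.
Qed.

Theorem theorem1 (R : realType) (la lb : seq bool) :
  (0 < n1 la)%N -> (0 < n0 la)%N -> (0 < n1 lb)%N -> (0 < n0 lb)%N ->
  exists lam0 : R, 0 <= lam0 /\
    forall lam : R, lam0 <= lam ->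
      dxAUC R la lb (xOrder lam la lb)
        <= Num.max (1 / (n1 la)%:R) (1 / (n1 lb)%:R).
Proof.
move=> h1a h0a h1b h0b.
exists (lam0 R la lb); split.
  by rewrite /lam0 addr_ge0 // mulr_ge0 ?Cst_ge0 // ltW // KK_gt0.
move=> lam hl.
pose M := Num.max (1 / (n1 la)%:R) (1 / (n1 lb)%:R) : R.
pose D i j := Dq R la lb (xO lam la lb i j).
pose a i j := (nth false la i * rbn lb j)%:R / ((n1 la)%:R * (n0 lb)%:R) : R.
pose b i j := (nth false lb j * rbn la i)%:R / ((n1 lb)%:R * (n0 la)%:R) : R.
have naP : (0 < size la)%N by apply: leq_trans h1a (count_size _ _).
have nbP : (0 < size lb)%N by apply: leq_trans h1b (count_size _ _).
have key : `|D (size la) (size lb)| <= M.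
  apply: (@grid R D a b (size la) (size lb) M) => //.
  - by rewrite le_max divr_ge0 ?ler0n.
  - by rewrite /D /= /Dq /Aq /Bq /cntAB /cntBA !big_ord0 !mul0r subr0.
  - by move=> i j; rewrite /a divr_ge0 ?mulr_ge0 ?ler0n.
  - by move=> i j; rewrite /b divr_ge0 ?mulr_ge0 ?ler0n.
  - move=> i j.
    have ea : a i j - a i j.+1 =
        (nth false la i && ~~ nth true lb j : nat)%:R / ((n1 la)%:R * (n0 lb)%:R).
      rewrite /a rbnS mulnDr natrD.
      have -> : (nth false la i * ~~ nth true lb j)%N = (nth false la i && ~~ nth true lb j : nat).
        by case: (nth false la i); rewrite ?mul1n ?mul0n.
      ring.
    have eb : b i j - b i.+1 j =
        (nth false lb j && ~~ nth true la i : nat)%:R / ((n1 lb)%:R * (n0 la)%:R).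
      rewrite /b rbnS mulnDr natrD.
      have -> : (nth false lb j * ~~ nth true la i)%N = (nth false lb j && ~~ nth true la i : nat).
        by case: (nth false lb j); rewrite ?mul1n ?mul0n.
      ring.
    rewrite ea eb.
    have hM1 : 1 / (n1 la)%:R <= M by rewrite le_max lexx.
    have hM2 : 1 / (n1 lb)%:R <= M by rewrite le_max lexx orbT.
    case: (boolP (nth false la i)) => hi /=.
      rewrite (@nth_ft la i hi) andbF mul0r addr0.
      have [u1 u2] := @frac_bnd R (~~ nth true lb j) _ _ h1a h0b.
      apply/andP; split; lra.
    rewrite mul0r add0r.
    have [u1 u2] := @frac_bnd R (nth false lb j && ~~ nth true la i) _ _ h1b h0a.
    apply/andP; split; lra.
  - by move=> i; rewrite /a rbn_size muln0 mul0r.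
  - by move=> j; rewrite /b rbn_size muln0 mul0r.
  - move=> i hi; rewrite /D !xO_i0 nseqS_rcons Dq_appA ?count_nseq /= ?mul1n ?mul0n //.
  - move=> j hj; rewrite /D /=; have -> : false :: nseq j false = rcons (nseq j false) false by rewrite -nseqS_rcons.
    rewrite Dq_appB ?count_nseq /= ?mul1n ?mul0n /b; [reflexivity|exact hj].
  - move=> i j hi hj.
    have [ci cj] := xO_count R lam la lb i j.+1.
    have [ci' cj'] := xO_count R lam la lb i.+1 j.
    have ex : Dq R la lb (rcons (xO lam la lb i j.+1) true) = D i j.+1 + a i j.+1.
      by rewrite Dq_appA ci ?cj.
    have ey : Dq R la lb (rcons (xO lam la lb i.+1 j) false) = D i.+1 j - b i.+1 j.
      by rewrite Dq_appB cj' ?ci'.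
    have cx1 : (count id (rcons (xO lam la lb i j.+1) true) <= size la)%N.
      by rewrite count_rcons' ci addn1.
    have cx2 : (count negb (rcons (xO lam la lb i j.+1) true) <= size lb)%N.
      by rewrite count_rcons' cj addn0.
    have cy1 : (count id (rcons (xO lam la lb i.+1 j) false) <= size la)%N.
      by rewrite count_rcons' ci' addn0.
    have cy2 : (count negb (rcons (xO lam la lb i.+1 j) false) <= size lb)%N.
      by rewrite count_rcons' cj' addn1.
    rewrite [D i.+1 j.+1]/D xO_SS.
    case: ifP => hG.
      left; rewrite ex; split => //; rewrite -ex -ey.
      by apply: (cmpG R la lb lam) => //; apply: ltW.
    right; rewrite ey; split => //; rewrite -ex -ey.
    by apply: (cmpG R la lb lam) => //; rewrite leNgt hG.
have [c1 c2] := xO_count R lam la lb (size la) (size lb).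
have eA : xAUC_ab R la lb (xOrder lam la lb) = Aq R la lb (xOrder lam la lb).
  by rewrite /xAUC_ab /Aq /compB /xOrder c2 subnn cats0 c1.
have eB : xAUC_ba R la lb (xOrder lam la lb) = Bq R la lb (xOrder lam la lb).
  by rewrite /xAUC_ba /Bq /Defs.compA /xOrder c1 subnn cats0 c2.
by rewrite /dxAUC eA eB.
Qed.
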